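(* Let $c,d$ be positive integers, $\alpha,\delta\in(0,1]$, and $C_0\subseteq\mathbb{F}_2^d$ a linear code with minimum distance $d_0$, with $\delta d_0>1$. Let $\epsilon\in(0,\delta-\frac1{d_0})$ be a constant. Then for all sufficiently large $n$ and every $(c,d,\alpha,\delta)$-bipartite expander $G$ with $n$ left vertices (and any fixed orderings of the neighborhoods of right vertices), the minimum distance of the Tanner code $T(G,C_0)$ is greater than $f_\delta^{-1}\left(\frac1{d_0}+\epsilon\right)\alpha n$.
   Context: Binary linear codes; the minimum distance of a code is the least Hamming distance between two distinct codewords. A bipartite graph $G=(L\cup R,E)$ is $(c,d)$-regular if left degrees are $c$ and right degrees $d$; $N(S)$ is the neighborhood of $S$. A $(c,d,\alpha,\delta)$-bipartite expander is a $(c,d)$-regular bipartite graph with $|N(S)|\ge\delta c|S|$ for every $S\subseteq L$ with $|S|\le\alpha|L|$. Tanner code: $L=[n]$, for each $v\in R$ a fixed ordering of $N(v)$ defines $x_{N(v)}\in\mathbb{F}_2^d$ for $x\in\mathbb{F}_2^n$, and $T(G,C_0)=\{x: x_{N(v)}\in C_0\ \forall v\in R\}$. Size-Expansion Function: for $k>1$, $f_\delta(k)$ is the optimal value of the linear program in variables $\beta_i$, $i\in\mathbb{N}^+$: minimize $\frac1k\sum_{i\ge1}\beta_i$ subject to $\sum_{i\ge1}i\beta_i=k$, $\sum_{i\ge1}\left(1-(1-\frac1k)^i\right)\beta_i\ge\delta$, $\beta_i\ge0$. For $y\in(0,\delta)$, $f_\delta^{-1}(y)$ denotes the value $k>1$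 with $f_\delta(k)=y$. The parameters $c,d,\alpha,\delta,C_0,\epsilon$ are constants independent of $n$. *)

(* Defs.v *)
From Stdlib Require Import Reals.
From Coquelicot Require Import Coquelicot.
From mathcomp Require Import all_boot.
Local Open Scope R_scope.

Set Implicit Arguments.
Unset Strict Implicit.
Unset Printing Implicit Defensive.

Definition word (n : nat) := {ffun 'I_n -> bool}.

Definition wadd (n : nat) (x y : word n) : word n := [ffun i => xorb (x i) (y i)].
Definition wzero (n : nat) : word n := [ffun=> false].

Definition hdist (n : nat) (x y : word n) : nat := #|[set i | x i != y i]|.

Definition is_linear_code (n : nat) (C : {set word n}) : Prop :=
  wzero n \in C /\ (forall x y, x \in C -> y \in C -> wadd x y \in C).

Definition min_distance (n : nat) (C : {set word n}) (d0 : nat) : Prop :=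
  (exists x y, [/\ x \in C, y \in C, x != y & hdist x y = d0]) /\
  (forall x y, x \in C -> y \in C -> x != y -> (d0 <= hdist x y)%N).

(* A bipartite graph with left vertices L = 'I_n and right vertices R = 'I_m
   together with the fixed ordering of each right neighbourhood is given by
   nbr : 'I_m -> 'I_d -> 'I_n, where nbr v j is the j-th neighbour of v.
   The edge set is {(u,v) | u = nbr v j for some j}. *)
Definition left_nbhd (n m d : nat) (nbr : 'I_m -> 'I_d -> 'I_n) (S : {set 'I_n})
  : {set 'I_m} := [set v | [exists j, nbr v j \in S]].

Definition is_regular_bigraph (n m c d : nat) (nbr : 'I_m -> 'I_d -> 'I_n) : Prop :=
  (forall v, injective (nbr v)) /\
  (forall u : 'I_n, #|[set v | u \in codom (nbr v)]| = c).

Definition is_expander (n m c d : nat) (alpha delta : R)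
  (nbr : 'I_m -> 'I_d -> 'I_n) : Prop :=
  is_regular_bigraph c nbr /\
  (forall S : {set 'I_n}, (INR #|S| <= alpha * INR n) ->
     (delta * INR c * INR #|S| <= INR #|left_nbhd nbr S|)).

Definition tanner (n m d : nat) (nbr : 'I_m -> 'I_d -> 'I_n) (C0 : {set word d})
  : {set word n} :=
  [set x : word n | [forall v, [ffun j => x (nbr v j)] \in C0]].

(* Size-Expansion Function.  Variables beta_i, i >= 1, are encoded as
   beta : nat -> R with beta i standing for beta_{i+1}. *)
Definition lp_feasible (delta k : R) (beta : nat -> R) : Prop :=
  (forall i, 0 <= beta i) /\
  ex_series beta /\
  is_series (fun i => INR i.+1 * beta i) k /\
  ex_series (fun i => (1 - (1 - / k) ^ i.+1) * beta i) /\
  (delta <= Series (fun i => (1 - (1 - / k) ^ i.+1) * beta i)).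

Definition f_delta (delta k : R) : Rbar :=
  Glb_Rbar (fun v => exists beta, lp_feasible delta k beta /\ v = (Series beta / k)).

(* Main.v *)
Require Import Defs.
From HB Require Import structures.
From Stdlib Require Import Reals Lra Lia Psatz ZArith.
From Coquelicot Require Import Coquelicot.
From mathcomp Require Import all_boot zify.
Set Implicit Arguments.
Unset Strict Implicit.
Unset Printing Implicit Defensive.

Lemma card_bsum (T : finType) (P : pred T) : #|P| = \sum_(x : T) (P x : nat).
Proof. rewrite -sum1_card big_mkcond; apply eq_bigr => x _; by rewrite unfold_in; case: (P x). Qed.

Lemma cards_bsum (T : finType) (A : {set T}) : #|A| = \sum_(x : T) ((x \in A) : nat).
Proof. rewrite -sum1_card big_mkcond; apply eq_bigr => x _; by case: (x \in A). Qed.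

Definition Av (n m d : nat) (nbr : 'I_m -> 'I_d -> 'I_n) (S : {set 'I_n}) (v : 'I_m)
  : {set 'I_n} := [set u in S | u \in codom (nbr v)].

Lemma sum_Av (n m c d : nat) (nbr : 'I_m -> 'I_d -> 'I_n) (S : {set 'I_n}) :
  is_regular_bigraph c nbr -> \sum_v #|Av nbr S v| = (c * #|S|)%N.
Proof.
move=> [_ Hreg].
transitivity (\sum_v \sum_u ((u \in S) && (u \in codom (nbr v)) : nat)).
  apply eq_bigr => v _; rewrite cards_bsum; apply eq_bigr => u _; by rewrite !inE.
rewrite exchange_big /=.
transitivity (\sum_u ((u \in S) : nat) * c)%N.
  apply eq_bigr => u _; case: (u \in S) => /=.
    rewrite mul1n -(Hreg u) cards_bsum; apply eq_bigr => v _; by rewrite inE.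
  rewrite mul0n; apply big1 => v _ //.
rewrite -big_distrl /= -cards_bsum mulnC //.
Qed.

Lemma nbhd_Av (n m d : nat) (nbr : 'I_m -> 'I_d -> 'I_n) (S T : {set 'I_n}) v :
  T \subset S -> (v \in left_nbhd nbr T) = ~~ [disjoint T & Av nbr S v].
Proof.
move=> HTS; rewrite inE -setI_eq0; apply/existsP/set0Pn.
  move=> [j Hj]; exists (nbr v j); rewrite !inE Hj /= (subsetP HTS _ Hj) /=.
  apply/codomP; by exists j.
move=> [u]; rewrite !inE => /andP [HuT /andP [_ /codomP [j Hj]]].
exists j; by rewrite -Hj.
Qed.

Definition Tset (n : nat) (S : {set 'I_n}) (t : nat) : {set {set 'I_n}} :=
  [set T : {set 'I_n} | T \subset S & #|T| == t].

Lemma card_hit (n m d : nat) (nbr : 'I_m -> 'I_d -> 'I_n) (S : {set 'I_n}) t v :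
  (#|[set T in Tset S t | v \in left_nbhd nbr T]| + 'C(#|S| - #|Av nbr S v|, t))%N
  = 'C(#|S|, t).
Proof.
have HA : Av nbr S v \subset S by apply/subsetP => u; rewrite inE => /andP [].
have -> : (#|S| - #|Av nbr S v| = #|S :\: Av nbr S v|)%N.
  by rewrite cardsD (setIidPr HA).
rewrite -(cards_draws S t) -(cards_draws (S :\: Av nbr S v) t).
rewrite -(cardsID [set T | v \in left_nbhd nbr T] (Tset S t)).
congr (_ + _)%N.
  congr (#|pred_of_set _|); apply/setP => T; by rewrite !inE.
congr (#|pred_of_set _|); apply/setP => T; rewrite !inE subsetD.
case HTS: (T \subset S) => /=; last by rewrite andbF.
have := nbhd_Av nbr v HTS; rewrite inE => ->.
by rewrite negbK.
Qed.

Lemma sum_nbhd (n m d : nat) (nbr : 'I_m -> 'I_d -> 'I_n) (S : {set 'I_n}) t :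
  \sum_(T in Tset S t) #|left_nbhd nbr T|
  = \sum_v #|[set T in Tset S t | v \in left_nbhd nbr T]|.
Proof.
transitivity (\sum_(T in Tset S t) \sum_v ((v \in left_nbhd nbr T) : nat)).
  apply eq_bigr => T _; by rewrite cards_bsum.
rewrite exchange_big /=; apply eq_bigr => v _.
rewrite cards_bsum big_mkcond /=; apply eq_bigr => T _; rewrite !inE.
by case: (_ && _).
Qed.

Lemma local_weight (n m d : nat) (nbr : 'I_m -> 'I_d -> 'I_n) (x y : word n) v :
  injective (nbr v) ->
  hdist [ffun j => x (nbr v j)] [ffun j => y (nbr v j)]
  = #|Av nbr [set i | x i != y i] v|.
Proof.
move=> Hinj; rewrite /hdist.
have -> : Av nbr [set i | x i != y i] v = nbr v @: [set j | x (nbr v j) != y (nbr v j)].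
  apply/setP => u; rewrite !inE; apply/andP/imsetP.
    move=> [Hu /codomP [j Hj]]; exists j; rewrite ?inE -?Hj //.
  move=> [j]; rewrite inE => Hj ->; split => //; apply/codomP; by exists j.
rewrite card_imset //; congr (#|pred_of_set _|); apply/setP => j; by rewrite !inE !ffunE.
Qed.

Lemma nbhd_card (n m d : nat) (nbr : 'I_m -> 'I_d -> 'I_n) (S : {set 'I_n}) :
  #|left_nbhd nbr S| = \sum_v ((0 < #|Av nbr S v|)%N : nat).
Proof.
rewrite cards_bsum; apply eq_bigr => v _.
rewrite (nbhd_Av _ _ (subxx S)) -setI_eq0 card_gt0.
have -> : S :&: Av nbr S v = Av nbr S v.
  apply/setIidPr; apply/subsetP => u; rewrite inE => /andP [] //.
by [].
Qed.

Local Open Scope R_scope.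
Unset Implicit Arguments.

Lemma exists_nat_gt (r : R) : exists N : nat, r < INR N.
Proof.
destruct (archimed r) as [H1 H2].
destruct (Z_le_gt_dec 0%Z (up r)) as [Hz|Hz].
- exists (Z.to_nat (up r)). rewrite INR_IZR_INZ Z2Nat.id //.
- exists 0%nat. simpl. have Hz2 : (up r < 0)%Z by lia. apply IZR_lt in Hz2. lra.
Qed.



Lemma pow_01 (x : R) (a : nat) : 0 <= x <= 1 -> 0 <= x ^ a <= 1.
Proof.
move=> Hx; elim: a => [|a IH] /=; first lra.
split; nra.
Qed.

Lemma h_scale (a : nat) (p lam : R) :
  0 <= p -> 1 <= lam -> lam * p <= 1 ->
  1 - (1 - lam * p) ^ a <= lam * (1 - (1 - p) ^ a).
Proof.
move=> Hp Hl Hlp.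
elim: a => [|a IH] /=; first lra.
have H1 := pow_01 (1 - lam * p) a ltac:(nra).
have H2 := pow_01 (1 - p) a ltac:(nra).
move: IH H1 H2; generalize ((1 - lam * p) ^ a) ((1 - p) ^ a) => X Y IH H1 H2.
have E0 : 0 <= p * (lam - 1) by nra.
have E1 : (1 - lam * p) * (1 - X) <= (1 - p) * (1 - X) by nra.
have E2 : (1 - p) * (1 - X) <= (1 - p) * (lam * (1 - Y)) by nra.
nra.
Qed.

Lemma h_mono (a : nat) (q r : R) : 0 <= q <= r -> r <= 1 ->
  1 - (1 - q) ^ a <= 1 - (1 - r) ^ a.
Proof.
move=> Hq Hr. have := pow_incr (1 - r) (1 - q) a ltac:(lra). lra.
Qed.

Lemma h_ub (i : nat) (p : R) : 0 <= p <= 1 ->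
  1 - (1 - p) ^ i.+1 <= p + INR i * p * (1 - p).
Proof.
move=> Hp; elim: i => [|i IH]; first (simpl; lra).
rewrite S_INR.
have H2 := pow_01 (1 - p) i.+1 ltac:(nra).
have -> : (1 - p) ^ i.+2 = (1 - p) * (1 - p) ^ i.+1 by [].
have : (1 - p) ^ i.+1 <= 1 - p.
  simpl. have := pow_01 (1 - p) i ltac:(nra). nra.
nra.
Qed.

Lemma bin_lb (s t d a : nat) : (a <= d)%N -> (d < s)%N -> (t + d <= s)%N ->
  INR 'C(s,t) * (1 - INR t / (INR s - INR d)) ^ a <= INR 'C(s - a, t).
Proof.
move=> Had Hds Htd.
have Hsd : INR d < INR s by apply lt_INR; apply/ltP.
have Htd' : INR t + INR d <= INR s by rewrite -plus_INR; apply le_INR; apply/leP.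
have Ht0 := pos_INR t.
set q := INR t / (INR s - INR d).
have Hq0 : 0 <= q by rewrite /q; apply Rdiv_le_0_compat; lra.
have Hq1 : q <= 1.
  rewrite /q; apply (Rmult_le_reg_r (INR s - INR d)); first lra.
  field_simplify; lra.
elim: a Had => [|a IH] Had.
  rewrite subn0 /=; lra.
have Ha : (a <= d)%N by apply: ltnW.
have {}IH := IH Ha.
have Hm := mul_bin_down (s - a) t.
have E : ((s - a).-1 = s - a.+1)%N by rewrite subnS.
rewrite E in Hm.
have Hma : (t < s - a)%N by lia.
have Hm' : INR (s - a) * INR 'C(s - a.+1, t) = INR (s - a - t) * INR 'C(s - a, t).
  have := f_equal INR Hm. rewrite !mult_INR. done.
have e1 : INR (s - a) = INR s - INR a by rewrite minus_INR //; apply/leP; lia.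
have e2 : INR (s - a - t) = INR s - INR a - INR t.
  by rewrite minus_INR ?e1 //; apply/leP; lia.
rewrite e1 e2 in Hm'.
have Hsa : INR a + 1 <= INR d by rewrite -S_INR; apply le_INR; apply/leP.
have Hmpos : INR s - INR a > INR s - INR d by lra.
have Htm : INR t / (INR s - INR a) <= q.
  rewrite /q. apply Rmult_le_compat_l; first lra.
  apply Rinv_le_contravar; lra.
have HC : INR 'C(s - a.+1, t) = (1 - INR t / (INR s - INR a)) * INR 'C(s - a, t).
  apply (Rmult_eq_reg_l (INR s - INR a)); last lra.
  rewrite Hm'. field. lra.
rewrite HC /=.
have P1 := pow_01 (1 - q) a ltac:(lra).
have C0 := pos_INR 'C(s, t).
have C1 := pos_INR 'C(s - a, t).
have : (1 - q) * INR 'C(s - a, t) <= (1 - INR t / (INR s - INR a)) * INR 'C(s - a, t) by nra.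
nra.
Qed.

Lemma lp_lb1 (K : R) (beta : nat -> R) : 1 < K -> lp_feasible 1 K beta -> K <= Series beta.
Proof.
move=> HK [H0 [Hex [Hk [Hexg Hg]]]].
set p := / K.
have Hp : 0 < p < 1.
  rewrite /p; split; first by apply Rinv_0_lt_compat; lra.
  rewrite -Rinv_1; apply Rinv_lt_contravar; lra.
set rhs := fun i => p * (1 - p) * (INR i.+1 * beta i) + p ^ 2 * beta i.
have Hex1 : ex_series (fun i => INR i.+1 * beta i) by exists K.
have Hexr : ex_series rhs.
  apply: ex_series_plus; apply: ex_series_scal_l => //.
have E : Series rhs = p * (1 - p) * K + p ^ 2 * Series beta.
  rewrite /rhs Series_plus; try (apply: ex_series_scal_l => //).
  by rewrite !Series_scal_l (is_series_unique _ _ Hk).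
have Hle : Series (fun i => (1 - (1 - / K) ^ i.+1) * beta i) <= Series rhs.
  apply Series_le => // i; rewrite /rhs -/p.
  have := h_ub i p ltac:(lra).
  have := pow_01 (1 - p) i.+1 ltac:(lra).
  have := H0 i. rewrite S_INR => *. split; first nra.
  nra.
rewrite E in Hle.
have Hpk : p * K = 1 by rewrite /p; field; lra.
have : p <= p ^ 2 * Series beta by nra.
move=> H.
have : 1 <= p * Series beta by nra.
move=> H2.
have : K * 1 <= K * (p * Series beta) by apply Rmult_le_compat_l; lra.
nra.
Qed.

Set Implicit Arguments.
Lemma Rplus_assoc' : associative Rplus. Proof. move=> *; ring. Qed.
HB.instance Definition _ := Monoid.isComLaw.Build R 0 Rplus Rplus_assoc' Rplus_comm Rplus_0_l.

Lemma INR_sum (I : finType) (f : I -> nat) :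
  INR (\sum_(i : I) f i) = \big[Rplus/0]_(i : I) INR (f i).
Proof. apply: (big_morph INR plus_INR) => //. Qed.

Lemma rsum_le (I : finType) (F G : I -> R) :
  (forall i, F i <= G i) -> \big[Rplus/0]_(i : I) F i <= \big[Rplus/0]_(i : I) G i.
Proof. move=> H; elim/big_ind2: _ => //; [lra | move=> *; lra]. Qed.

Lemma rsum_scal (I : finType) (c : R) (F : I -> R) :
  c * \big[Rplus/0]_(i : I) F i = \big[Rplus/0]_(i : I) (c * F i).
Proof. elim/big_rec2: _ => [|i a b _ <-]; ring. Qed.

Lemma rsum_plus (I : finType) (F G : I -> R) :
  \big[Rplus/0]_(i : I) (F i + G i) = \big[Rplus/0]_(i : I) F i + \big[Rplus/0]_(i : I) G i.
Proof. by rewrite big_split. Qed.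

Definition cntR (m : nat) (a : 'I_m -> nat) (i : nat) : R :=
  \big[Rplus/0]_(v : 'I_m) (if a v == i.+1 then 1 else 0).

Lemma count_sum (m D : nat) (a : 'I_m -> nat) (W : nat -> R) :
  W 0%N = 0 -> (forall v, (a v <= D)%N) ->
  \big[Rplus/0]_(i < D) (W i.+1 * cntR a i) = \big[Rplus/0]_(v : 'I_m) W (a v).
Proof.
move=> W0 HaD.
transitivity (\big[Rplus/0]_(i < D) \big[Rplus/0]_(v : 'I_m) (if a v == i.+1 then W i.+1 else 0)).
  apply eq_bigr => i _; rewrite /cntR rsum_scal; apply eq_bigr => v _.
  case: (_ == _); ring.
rewrite exchange_big /=; apply eq_bigr => v _.
case Hav: (a v) => [|k].
  by rewrite W0; apply big1 => i _.
have Hk : (k < D)%N by rewrite -Hav; apply HaD.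
rewrite (bigD1 (Ordinal Hk)) //= eqxx big1; first ring.
move=> i Hi; case: eqP => // [[Hik]]; exfalso; move/eqP: Hi; apply; apply: val_inj => /=.
by [].
Qed.

Lemma sum_n_big (f : nat -> R) (N : nat) : sum_n f N = \big[Rplus/0]_(i < N.+1) f i.
Proof.
elim: N => [|N IH]; first by rewrite sum_O big_ord_recr big_ord0 /=; ring.
by rewrite sum_Sn IH [in RHS]big_ord_recr.
Qed.

Lemma is_series_fin (f : nat -> R) (D : nat) :
  (forall i, (D <= i)%N -> f i = 0) -> is_series f (\big[Rplus/0]_(i < D) f i).
Proof.
move=> Hf.
have E : forall N, (D <= N.+1)%N -> sum_n f N = \big[Rplus/0]_(i < D) f i.
  move=> N HN; rewrite sum_n_big -!(big_mkord xpredT f) (big_cat_nat _ (n := D)) //=.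
  rewrite [X in _ + X]big1_seq ?Rplus_0_r //.
  move=> i /andP [_]; rewrite mem_index_iota => /andP [Hi _]; exact: Hf.
apply: (filterlim_ext_loc (fun _ => \big[Rplus/0]_(i < D) f i)); last exact: filterlim_const.
exists D => N HN; rewrite E //; apply: leqW; apply/leP => //.
Qed.


Set Implicit Arguments.
Lemma sum_lb (I : finType) (P : {set I}) (f : I -> nat) (r : R) :
  (forall i, i \in P -> r <= INR (f i)) -> INR #|P| * r <= INR (\sum_(i in P) f i).
Proof.
move=> H; rewrite -sum1_card.
elim/big_ind2: _ => //=.
- simpl; lra.
- move=> a1 b1 a2 b2 H1 H2; rewrite !plus_INR; lra.
- move=> i Hi; simpl; have := H i Hi; lra.
Qed.

Lemma beta_sum (m d : nat) (a : 'I_m -> nat) (W : nat -> R) (A B : R) :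
  (0 < d)%N -> W 0%N = 0 -> (forall v, (a v <= d)%N) ->
  \big[Rplus/0]_(i < d) (W i.+1 * (A * cntR a i + (if i == 0%N :> nat then B else 0)))
  = A * \big[Rplus/0]_(v : 'I_m) W (a v) + W 1%N * B.
Proof.
move=> Hd W0 Ha.
rewrite -(count_sum W0 Ha) rsum_scal.
transitivity (\big[Rplus/0]_(i < d) (A * (W i.+1 * cntR a i) + (if i == 0%N :> nat then W i.+1 * B else 0))).
  apply eq_bigr => i _; case: (_ == _); ring.
rewrite rsum_plus; congr (_ + _).
case: d Hd Ha => [//|d'] _ _.
rewrite big_ord_recl /= big1; first ring.
by [].
Qed.

Lemma beta_zero (m d : nat) (a : 'I_m -> nat) (A B : R) i :
  (0 < d)%N -> (forall v, (a v <= d)%N) -> (d <= i)%N ->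
  A * cntR a i + (if i == 0%N :> nat then B else 0) = 0.
Proof.
move=> Hd Ha Hi.
have -> : (i == 0%N :> nat) = false by apply/eqP; lia.
rewrite /cntR big1; first ring.
move=> v _; have := Ha v; case: eqP => // ->; lia.
Qed.

Lemma cntR_ge0 (m : nat) (a : 'I_m -> nat) i : 0 <= cntR a i.
Proof.
rewrite /cntR; elim/big_ind: _ => //; [lra | move=> *; lra | move=> v _; case: (_ == _); lra].
Qed.

Theorem theorem5p6 (c d : nat) (alpha delta : R) (C0 : {set word d}) (d0 : nat)
  (eps : R) :
  (0 < c)%N -> (0 < d)%N ->
  (0 < alpha) -> (alpha <= 1) -> (0 < delta) -> (delta <= 1) ->
  is_linear_code C0 -> min_distance C0 d0 ->
  (1 < delta * INR d0) ->
  (0 < eps) -> (eps < delta - 1 / INR d0) ->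
  forall K : R, (1 < K) -> f_delta delta K = Rbar.Finite (1 / INR d0 + eps) ->
  exists N : nat, forall n : nat, (N <= n)%N ->
    forall (m : nat) (nbr : 'I_m -> 'I_d -> 'I_n),
      is_expander c alpha delta nbr ->
      forall x y : word n, x \in tanner nbr C0 -> y \in tanner nbr C0 -> x != y ->
        (K * alpha * INR n < INR (hdist x y)).
Proof.
move=> Hc Hd Ha0 Ha1 Hdl0 Hdl1 Hlin Hmin Hdd0 He0 He1 K HK Hf.
have HD0 : 1 < INR d0 by have := pos_INR d0; nra.
have HiD0 : 0 < 1 / INR d0 by apply Rdiv_lt_0_compat; lra.
set E := fun v => exists beta, lp_feasible delta K beta /\ v = Series beta / K.
have Hlb : forall beta, lp_feasible delta K beta -> 1 / INR d0 + eps <= Series beta / K.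
  move=> beta Hb.
  have [H1 _] := Glb_Rbar_correct E.
  have := H1 (Series beta / K) (ex_intro _ beta (conj Hb erefl)).
  rewrite /f_delta in Hf. by rewrite -/E Hf.
case: (Req_dec delta 1) => Hdelta.
  exfalso.
  have [_ H2] := Glb_Rbar_correct E.
  have : Rbar_le (Rbar.Finite 1) (Rbar.Finite (1 / INR d0 + eps)).
    rewrite -Hf /f_delta -/E. apply H2. move=> v [beta [Hb ->]] /=.
    rewrite Hdelta in Hb. have H := lp_lb1 K beta HK Hb.
    have HK' : K * / K = 1 by field; lra.
    have : 0 < / K by apply Rinv_0_lt_compat; lra.
    rewrite /Rdiv. nra.
  simpl. lra.
have Hdl : delta < 1 by lra.
set th := eps / 2.
have Hth : 0 < th < 1 / 2 by rewrite /th; lra.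
have Hth1 : 0 < th * (1 - delta) by nra.
set M := K * INR d / (K - 1) + INR d + 1 + (K + INR d) / (th * (1 - delta)).
have [N HN] := exists_nat_gt (M / alpha).
exists N => n Hn m nbr [Hreg Hexp] x y Hx Hy Hxy.
apply Rnot_le_lt => Hcon.
set S := [set i | x i != y i].
have Hsdef : hdist x y = #|S| by [].
rewrite Hsdef in Hcon.
set s := #|S| in Hcon *.
have Hs0 : (0 < s)%N.
  case: (boolP [exists i, x i != y i]) => [/existsP [i Hi]| /existsPn H].
    rewrite /s card_gt0; apply/set0Pn; exists i; by rewrite inE.
  exfalso; move/eqP: Hxy; apply; apply/ffunP => i; move: (H i); by move/negPn/eqP.
have [Hinj Hdeg] := Hreg.
set a := fun v => #|Av nbr S v|.
have Hsum : (\sum_v a v = c * s)%N := sum_Av S Hreg.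
have Hloc : forall v, [ffun j => x (nbr v j)] \in C0 /\ [ffun j => y (nbr v j)] \in C0.
  move=> v; move: Hx Hy; rewrite !inE => /forallP Hx /forallP Hy; split; [exact: Hx v | exact: Hy v].
have Hlw : forall v, a v = hdist [ffun j => x (nbr v j)] [ffun j => y (nbr v j)].
  move=> v; by rewrite (local_weight x y (Hinj v)).
have Had : forall v, (a v <= d)%N.
  move=> v; rewrite Hlw /hdist; apply: leq_trans (max_card _) _; by rewrite card_ord.
have Hd0a : forall v, (0 < a v)%N -> (d0 <= a v)%N.
  move=> v Hv; have [Hxv Hyv] := Hloc v; rewrite Hlw in Hv *.
  apply: Hmin.2 => //; apply/negP => /eqP Eq; rewrite Eq in Hv.
  move: Hv; rewrite /hdist.
  have -> : [set j | [ffun j => y (nbr v j)] j != [ffun j => y (nbr v j)] j] = set0.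
    by apply/setP => j; rewrite !inE eqxx.
  by rewrite cards0.
have HNS : #|left_nbhd nbr S| = (\sum_v ((0 < a v)%N : nat))%N := nbhd_card nbr S.
have Hd0sum : (d0 * \sum_v ((0 < a v)%N : nat) <= c * s)%N.
  rewrite -Hsum big_distrr /=; apply leq_sum => v _.
  case: (boolP (0 < a v)%N) => H /=; [rewrite muln1; exact: Hd0a | by rewrite muln0].
have Hcr : 0 < INR c by apply lt_0_INR; apply/ltP.
have Hsr : 0 < INR s by apply lt_0_INR; apply/ltP.
have HA1 : INR d0 * INR (\sum_v ((0 < a v)%N : nat)) <= INR c * INR s.
  by rewrite -!mult_INR; apply le_INR; apply/leP.
case: (Rle_or_lt (INR s) (alpha * INR n)) => [Hsm|Hsb].
  have := Hexp S Hsm; rewrite HNS => H.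
  have Hcs : 0 < INR c * INR s by nra.
  have H3 := Rmult_le_compat_l (INR d0) _ _ ltac:(lra) H.
  rewrite -/s in H3.
  have : delta * INR d0 * (INR c * INR s) <= INR c * INR s by lra.
  nra.
have Hnn : INR N <= INR n by apply le_INR; apply/leP.
have HMa : M < alpha * INR N.
  have : M = alpha * (M / alpha) by field; lra.
  move=> ->; apply Rmult_lt_compat_l => //.
have HsM : M < INR s by nra.
have Hdr := pos_INR d.
have HM1 : 0 <= K * INR d / (K - 1).
  apply Rdiv_le_0_compat; [nra | lra].
have HM2 : 0 <= (K + INR d) / (th * (1 - delta)).
  apply Rdiv_le_0_compat; lra.
have Hsd1 : K * INR d <= INR s * (K - 1).
  have : K * INR d / (K - 1) <= INR s by rewrite /M in HsM; lra.
  move=> H; have := Rmult_le_compat_r (K - 1) _ _ ltac:(lra) H.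
  have -> : K * INR d / (K - 1) * (K - 1) = K * INR d by field; lra.
  lra.
have Hsd2 : INR d + 1 <= INR s by rewrite /M in HsM; lra.
have Heta : K + INR d <= INR s * (th * (1 - delta)).
  have : (K + INR d) / (th * (1 - delta)) <= INR s by rewrite /M in HsM; lra.
  move=> H; have := Rmult_le_compat_r (th * (1 - delta)) _ _ ltac:(lra) H.
  have -> : (K + INR d) / (th * (1 - delta)) * (th * (1 - delta)) = K + INR d by field; lra.
  lra.
set r := INR s / K.
have Hr0 : 0 <= r by rewrite /r; apply Rdiv_le_0_compat; lra.
have HrK : r * K = INR s by rewrite /r; field; lra.
have [Hz1 Hz2] := base_Int_part r.
set z := Int_part r in Hz1 Hz2.
have Hz0 : (0 <= z)%Z.
  have : (-1 < z)%Z by apply lt_IZR; lra.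
  lia.
set t := Z.to_nat z.
have Ht : INR t = IZR z by rewrite /t INR_IZR_INZ Z2Nat.id.
have HtA : INR t <= r by lra.
have HtB : r - 1 < INR t by lra.
have Htd : INR t + INR d <= INR s by nra.
have Htdn : (t + d <= s)%N by apply/leP; apply INR_le; rewrite plus_INR.
have Hdsn : (d < s)%N by apply/ltP; apply INR_lt; lra.
have Htsn : (t <= s)%N by lia.
have Htan : INR t <= alpha * INR n.
  have : r <= alpha * INR n.
    have : r * K <= (alpha * INR n) * K by lra.
    move=> H; apply (Rmult_le_reg_r K); lra.
  lra.
have Hexpt : forall T, T \in Tset S t -> delta * INR c * INR t <= INR #|left_nbhd nbr T|.
  move=> T; rewrite inE => /andP [_ /eqP HT]; rewrite -HT; apply Hexp; rewrite HT //.
have Hsum1 := sum_lb Hexpt.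
rewrite cards_draws -/s sum_nbhd INR_sum in Hsum1.
set Cst := INR 'C(s, t) in Hsum1.
have HC0 : 0 < Cst by rewrite /Cst; apply lt_0_INR; apply/ltP; rewrite bin_gt0.
set q := INR t / (INR s - INR d).
have Hhit : forall v, INR #|[set T in Tset S t | v \in left_nbhd nbr T]| <= Cst * (1 - (1 - q) ^ (a v)).
  move=> v; have E1 := card_hit nbr S t v.
  have E2 : INR #|[set T in Tset S t | v \in left_nbhd nbr T]| + INR 'C(s - a v, t) = Cst.
    rewrite /Cst -plus_INR; apply f_equal; exact: E1.
  have := bin_lb s t d (a v) (Had v) Hdsn Htdn. rewrite -/q -/Cst. lra.
have Hq : Cst * (delta * INR c * INR t) <= Cst * \big[Rplus/0]_(v : 'I_m) (1 - (1 - q) ^ (a v)).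
  rewrite rsum_scal; apply: Rle_trans Hsum1 _; apply rsum_le => v; exact: Hhit v.
have Hq2 : delta * INR c * INR t <= \big[Rplus/0]_(v : 'I_m) (1 - (1 - q) ^ (a v)).
  apply (Rmult_le_reg_l Cst) => //.
set lam := INR s / (INR s - INR d).
set p := / K.
have Hp : 0 < p by rewrite /p; apply Rinv_0_lt_compat; lra.
have Hlam : 1 <= lam.
  rewrite /lam; apply (Rmult_le_reg_r (INR s - INR d)); first lra.
  field_simplify; lra.
have Hlp : lam * p <= 1.
  rewrite /lam /p; apply (Rmult_le_reg_r (K * (INR s - INR d))); first nra.
  field_simplify; lra.
have Hqlp : q <= lam * p.
  rewrite /q /lam /p; apply (Rmult_le_reg_r (K * (INR s - INR d))); first nra.
  field_simplify; nra.
have Hq0 : 0 <= q by rewrite /q; apply Rdiv_le_0_compat; [apply pos_INR | lra].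
set H := \big[Rplus/0]_(v : 'I_m) (1 - (1 - p) ^ (a v)).
have HH : delta * INR c * INR t <= lam * H.
  apply: Rle_trans Hq2 _; rewrite /H rsum_scal; apply rsum_le => v.
  apply: Rle_trans (h_scale (a v) p lam ltac:(lra) Hlam Hlp).
  apply h_mono; lra.
set mu := K / (INR c * INR s).
have Hmu : 0 < mu by rewrite /mu; apply Rdiv_lt_0_compat; nra.
set beta := fun i => (1 - th) * mu * cntR a i + (if i == 0%N :> nat then th * K else 0).
have Hbz : forall i, (d <= i)%N -> beta i = 0.
  move=> i Hi; rewrite /beta; exact: (beta_zero _ _ Hd Had Hi).
have Hser : forall w : nat -> R, is_series (fun i => w i * beta i)
    (\big[Rplus/0]_(i < d) (w i * beta i)).
  move=> w; apply: is_series_fin => i Hi; rewrite Hbz //; ring.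
have S1 : \big[Rplus/0]_(i < d) beta i
    = (1 - th) * mu * \big[Rplus/0]_(v : 'I_m) INR ((0 < a v)%N : nat) + th * K.
  have Hb := @beta_sum _ _ _ (fun k => INR ((0 < k)%N : nat)) ((1 - th) * mu) (th * K) Hd erefl Had.
  apply: eq_trans (eq_trans _ Hb) _.
    apply eq_bigr => i _; rewrite /beta /=; ring.
  simpl; ring.
have S2 : \big[Rplus/0]_(i < d) (INR i.+1 * beta i)
    = (1 - th) * mu * \big[Rplus/0]_(v : 'I_m) INR (a v) + th * K.
  have Hb := @beta_sum _ _ _ INR ((1 - th) * mu) (th * K) Hd erefl Had.
  apply: eq_trans (eq_trans _ Hb) _.
    apply eq_bigr => i _; rewrite /beta /=; ring.
  simpl; ring.
have S3 : \big[Rplus/0]_(i < d) ((1 - (1 - / K) ^ i.+1) * beta i)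
    = (1 - th) * mu * H + (1 - (1 - / K) ^ 1) * (th * K).
  have Hb := @beta_sum _ _ _ (fun k => 1 - (1 - p) ^ k) ((1 - th) * mu) (th * K) Hd ltac:(simpl; ring) Had.
  apply: eq_trans (eq_trans _ Hb) _.
    apply eq_bigr => i _; rewrite /beta /p /=; ring.
  by [].
have HA2 : \big[Rplus/0]_(v : 'I_m) INR (a v) = INR c * INR s.
  by rewrite -INR_sum Hsum mult_INR.
have HA1' : INR d0 * \big[Rplus/0]_(v : 'I_m) INR ((0 < a v)%N : nat) <= INR c * INR s.
  by rewrite -INR_sum.
have HSb : is_series beta (\big[Rplus/0]_(i < d) beta i).
  have E0 : \big[Rplus/0]_(i < d) beta i = \big[Rplus/0]_(i < d) (1 * beta i).
    apply eq_bigr => i _; ring.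
  rewrite E0; apply: (is_series_ext (fun i => 1 * beta i)); [move=> i; exact: Rmult_1_l | exact: (Hser (fun _ => 1))].
have Hcs : 0 < INR c * INR s by nra.
have EK : (1 - th) * mu * (INR c * INR s) + th * K = K by rewrite /mu; field; lra.
have Eth : (1 - (1 - / K) ^ 1) * (th * K) = th by simpl; field; lra.
have HH2 : delta * INR c * INR t * (INR s - INR d) <= INR s * H.
  have E3 : lam * (INR s - INR d) = INR s by rewrite /lam; field; lra.
  have := Rmult_le_compat_r (INR s - INR d) _ _ ltac:(lra) HH.
  have E5 : lam * H * (INR s - INR d) = INR s * H by transitivity (lam * (INR s - INR d) * H); [ring | rewrite E3; ring].
  lra.
have X1 : K * INR t >= INR s - K.
  have := Rmult_lt_compat_l K _ _ ltac:(lra) HtB. lra.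
have X2 : INR s * H * K >= delta * INR c * (INR s - K) * (INR s - INR d).
  have Y1 : 0 <= delta * INR c * (INR s - INR d).
    apply Rmult_le_pos; [apply Rmult_le_pos|]; lra.
  have Y2 : delta * INR c * (INR s - INR d) * (INR s - K) <= delta * INR c * (INR s - INR d) * (K * INR t).
    apply Rmult_le_compat_l; lra.
  have := Rmult_le_compat_r K _ _ ltac:(lra) HH2. lra.
have X3 : (INR s - K) * (INR s - INR d) >= INR s * INR s * (1 - th * (1 - delta)).
  have := Rmult_le_compat_l (INR s) _ _ ltac:(lra) Heta.
  have : 0 <= K * INR d by apply Rmult_le_pos; lra.
  lra.
have X4 : mu * H >= delta * (1 - th * (1 - delta)).
  have Y3 : INR s * H * K >= delta * INR c * (INR s * INR s * (1 - th * (1 - delta))).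
    have Y4 : 0 <= delta * INR c by apply Rmult_le_pos; lra.
    have := Rmult_le_compat_l (delta * INR c) _ _ Y4 (Rge_le _ _ X3). lra.
  have E4 : mu * H * (INR c * INR s) * INR s = INR s * H * K by rewrite /mu; field; lra.
  have Y5 : mu * H * (INR c * INR s) * INR s >= delta * (1 - th * (1 - delta)) * (INR c * INR s) * INR s by lra.
  have Hcss : 0 < INR c * INR s * INR s by apply Rmult_lt_0_compat; lra.
  apply Rle_ge; apply (Rmult_le_reg_r (INR c * INR s * INR s)) => //; lra.
have Hfeas : lp_feasible delta K beta.
  split.
    move=> i; rewrite /beta; have := cntR_ge0 a i => H0.
    have P1 : 0 <= (1 - th) * mu * cntR a i by apply Rmult_le_pos; [apply Rmult_le_pos|]; lra.
    have P2 : 0 <= th * K by apply Rmult_le_pos; lra.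
    case: (_ == _); lra.
  split; first by exists (\big[Rplus/0]_(i < d) beta i).
  split.
    have := Hser (fun i => INR i.+1); rewrite S2 HA2 EK //.
  split; first by eexists; exact: (Hser (fun i => (1 - (1 - / K) ^ i.+1))).
  rewrite (is_series_unique _ _ (Hser _)) S3 Eth.
  have Y6 : 0 <= delta * (1 - th * (1 - delta)).
    apply Rmult_le_pos; first lra.
    have : th * (1 - delta) <= 1 by nra. lra.
  have : (1 - th) * (mu * H) >= (1 - th) * (delta * (1 - th * (1 - delta))).
    apply Rle_ge; apply Rmult_le_compat_l; lra.
  have : 0 <= th * (1 - delta) * (1 - (1 - th) * delta).
    apply Rmult_le_pos; first lra.
    have : (1 - th) * delta <= 1 by nra. lra.
  lra.
have := Hlb beta Hfeas.
rewrite (is_series_unique _ _ HSb) S1.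
set A1 := \big[Rplus/0]_(v : 'I_m) INR ((0 < a v)%N : nat) in HA1' *.
have EV : ((1 - th) * mu * A1 + th * K) / K = (1 - th) * (A1 / (INR c * INR s)) + th.
  rewrite /mu; field; lra.
rewrite EV.
have Z1 : A1 / (INR c * INR s) <= 1 / INR d0.
  apply (Rmult_le_reg_r (INR c * INR s * INR d0)); first (apply Rmult_lt_0_compat; lra).
  field_simplify; lra.
have Z2 : (1 - th) * (A1 / (INR c * INR s)) <= (1 - th) * (1 / INR d0).
  apply Rmult_le_compat_l; lra.
have : 0 <= th * (1 / INR d0) by apply Rmult_le_pos; lra.
rewrite /th in Z2 * => *. lra.
Qed.
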